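(* On $\mathbb{R}^3$ with coordinates $(x,y,z)$ (the Heisenberg group $H_3$), let $\theta^1 = x\,dy + dz$, $\theta^2 = dy$, $\theta^3 = dx$. For arbitrary positive constants $A,B,C$, consider the left-invariant Lorentzian metric $$g = A\,(\theta^1)^2 + B\,(\theta^2)^2 - C\,(\theta^3)^2 .$$ Then there exist a smooth vector field $X$ on $\mathbb{R}^3$ and a constant $\alpha<0$ such that $$2\,\mathrm{Ric}[g] + L_X g + \alpha\, g = 0 .$$ That is, every such metric is a shrinking Lorentzian Ricci soliton.
   Context: $L_X$ denotes the Lie derivative along $X$. A Ricci soliton with $\alpha<0$ in the equation $2\,\mathrm{Ric}[g] + L_X g + \alpha g = 0$ is called shrinking. *)

(* Defs.v *)
From Stdlib Require Import Reals Lra Classical ClassicalEpsilon.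
Open Scope R_scope.

(** Points of R^3 = H_3, coordinates (x,y,z) indexed 0,1,2. *)
Definition pt : Type := (R * R * R)%type.

Definition coord (p : pt) (i : nat) : R :=
  match p with (x, y, z) =>
    match i with 0%nat => x | 1%nat => y | _ => z end end.

Definition shift (p : pt) (i : nat) (h : R) : pt :=
  match p with (x, y, z) =>
    match i with 0%nat => (x + h, y, z) | 1%nat => (x, y + h, z)
            | _ => (x, y, z + h) end end.

Definition has_pd (f : pt -> R) (i : nat) (p : pt) (l : R) : Prop :=
  derivable_pt_lim (fun t => f (shift p i t)) 0 l.

(** The partial derivative (the true one whenever it exists; 0 otherwise). *)
Definition pd (f : pt -> R) (i : nat) (p : pt) : R :=
  match excluded_middle_informative (exists l, has_pd f i p l) with
  | left H => proj1_sig (constructive_indefinite_description _ H)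
  | right _ => 0
  end.

Definition cont_at (f : pt -> R) (p : pt) : Prop :=
  forall eps, 0 < eps -> exists delta, 0 < delta /\
    forall q, Rabs (coord q 0 - coord p 0) < delta ->
              Rabs (coord q 1 - coord p 1) < delta ->
              Rabs (coord q 2 - coord p 2) < delta ->
              Rabs (f q - f p) < eps.

Fixpoint iter_pd (l : list nat) (f : pt -> R) : pt -> R :=
  match l with
  | nil => f
  | cons i l' => pd (iter_pd l' f) i
  end.

Definition smooth (f : pt -> R) : Prop :=
  forall (l : list nat) (p : pt),
    cont_at (iter_pd l f) p /\
    forall i, (i < 3)%nat -> exists d, has_pd (iter_pd l f) i p d.

Definition sum3 (f : nat -> R) : R := f 0%nat + f 1%nat + f 2%nat.

Definition covec := nat -> pt -> R.
Definition tensor2 := nat -> nat -> pt -> R.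
Definition vfield := nat -> pt -> R.

Definition theta1 : covec := fun i p =>
  match i with 0%nat => 0 | 1%nat => coord p 0 | 2%nat => 1 | _ => 0 end.
Definition theta2 : covec := fun i p =>
  match i with 1%nat => 1 | _ => 0 end.
Definition theta3 : covec := fun i p =>
  match i with 0%nat => 1 | _ => 0 end.

Definition heis_metric (A B C : R) : tensor2 := fun i j p =>
  A * theta1 i p * theta1 j p + B * theta2 i p * theta2 j p
  - C * theta3 i p * theta3 j p.

(** Inverse of a 3x3 metric via the adjugate (indices mod 3). *)
Definition m3 (k : nat) : nat := Nat.modulo k 3.

Definition det3 (g : tensor2) (p : pt) : R :=
  sum3 (fun j => g 0%nat j p *
    (g 1%nat (m3 (j+1)) p * g 2%nat (m3 (j+2)) p
     - g 1%nat (m3 (j+2)) p * g 2%nat (m3 (j+1)) p)).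

Definition inv_metric (g : tensor2) : tensor2 := fun i j p =>
  (g (m3 (j+1)) (m3 (i+1)) p * g (m3 (j+2)) (m3 (i+2)) p
   - g (m3 (j+1)) (m3 (i+2)) p * g (m3 (j+2)) (m3 (i+1)) p) / det3 g p.

Definition christoffel (g : tensor2) (k i j : nat) (p : pt) : R :=
  / 2 * sum3 (fun l => inv_metric g k l p *
     (pd (g j l) i p + pd (g i l) j p - pd (g i j) l p)).

Definition ricci (g : tensor2) : tensor2 := fun i j p =>
  sum3 (fun k =>
    pd (christoffel g k i j) k p - pd (christoffel g k i k) j p
    + sum3 (fun l => christoffel g k k l p * christoffel g l i j p
                    - christoffel g k j l p * christoffel g l i k p)).

Definition lie_deriv (X : vfield) (g : tensor2) : tensor2 := fun i j p =>
  sum3 (fun k => X k p * pd (g i j) k p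
                 + g k j p * pd (X k) i p + g i k p * pd (X k) j p).

(* Main.v *)
Require Import Defs.
From Stdlib Require Import Reals Lra Lia Psatz FunctionalExtensionality Classical ClassicalEpsilon.
Open Scope R_scope.

Lemma quad_lim u v w x0 : derivable_pt_lim (fun t => u + v*t + w*t*t) x0 (v + 2*w*x0).
Proof.
  assert (H := derivable_pt_lim_plus _ _ x0 _ _
    (derivable_pt_lim_plus _ _ x0 _ _ (derivable_pt_lim_const u x0)
       (derivable_pt_lim_scal _ v x0 _ (derivable_pt_lim_id x0)))
    (derivable_pt_lim_mult _ _ x0 _ _ (derivable_pt_lim_scal _ w x0 _ (derivable_pt_lim_id x0))
       (derivable_pt_lim_id x0))).
  unfold plus_fct, mult_fct, mult_real_fct, fct_cte, id in H.
  replace (v + 2*w*x0) with (0 + v * 1 + (w * 1 * x0 + w * x0 * 1)) by ring.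
  exact H.
Qed.

Lemma shape_lim f u v w x0 l : (forall t, f t = u + v*t + w*t*t) -> l = v + 2*w*x0 ->
  derivable_pt_lim f x0 l.
Proof.
  intros H1 H2. replace f with (fun t => u + v*t + w*t*t).
  subst; apply quad_lim. extensionality t; now rewrite H1.
Qed.

Lemma pd_eq f i p l : has_pd f i p l -> pd f i p = l.
Proof.
  intros H. unfold pd. destruct excluded_middle_informative as [e|n].
  - destruct constructive_indefinite_description as [l' H']. simpl.
    exact (uniqueness_limite _ _ _ _ H' H).
  - exfalso; apply n; eauto.
Qed.

Definition quad (a b c x : R) : R := a + b*x + c*x*x.

Lemma pd_quad a b c m p :
  pd (fun p => quad a b c (coord p 0)) m p =
  match m with 0%nat => b + 2*c*coord p 0 | _ => 0 end.
Proof.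
  apply pd_eq. unfold has_pd. destruct p as [[x y] z].
  destruct m as [|[|m]]; simpl.
  - apply (shape_lim _ (quad a b c x) (b + 2*c*x) c); intros; unfold quad; ring.
  - apply (shape_lim _ (quad a b c x) 0 0); intros; unfold quad; ring.
  - apply (shape_lim _ (quad a b c x) 0 0); intros; unfold quad; ring.
Qed.

Definition aff (a b c d : R) (p : pt) : R := a*coord p 0 + b*coord p 1 + c*coord p 2 + d.

Lemma pd_aff a b c d m p :
  pd (aff a b c d) m p = match m with 0%nat => a | 1%nat => b | _ => c end.
Proof.
  apply pd_eq. unfold has_pd. destruct p as [[x y] z].
  destruct m as [|[|m]]; simpl.
  - apply (shape_lim _ (aff a b c d (x,y,z)) a 0); intros; unfold aff; simpl; ring.
  - apply (shape_lim _ (aff a b c d (x,y,z)) b 0); intros; unfold aff; simpl; ring.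
  - apply (shape_lim _ (aff a b c d (x,y,z)) c 0); intros; unfold aff; simpl; ring.
Qed.

Lemma aff_cont a b c d p : cont_at (aff a b c d) p.
Proof.
  intros eps He. set (M := Rabs a + Rabs b + Rabs c + 1).
  assert (HM : 0 < M) by (unfold M; pose proof (Rabs_pos a); pose proof (Rabs_pos b); pose proof (Rabs_pos c); lra).
  exists (eps / M). split. { apply Rdiv_lt_0_compat; lra. }
  intros q H0 H1 H2. unfold aff.
  replace (a * coord q 0 + b * coord q 1 + c * coord q 2 + d -
    (a * coord p 0 + b * coord p 1 + c * coord p 2 + d)) with
    (a * (coord q 0 - coord p 0) + b * (coord q 1 - coord p 1) + c * (coord q 2 - coord p 2)) by ring.
  set (u := coord q 0 - coord p 0) in *. set (v := coord q 1 - coord p 1) in *.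
  set (w := coord q 2 - coord p 2) in *.
  eapply Rle_lt_trans. apply Rabs_triang.
  eapply Rle_lt_trans. apply Rplus_le_compat_r. apply Rabs_triang.
  rewrite !Rabs_mult.
  assert (Ha := Rabs_pos a). assert (Hb := Rabs_pos b). assert (Hc := Rabs_pos c).
  assert (Hu := Rabs_pos u). assert (Hv := Rabs_pos v). assert (Hw := Rabs_pos w).
  assert (E : eps = M * (eps / M)) by (field; lra).
  set (dl := eps / M) in *.
  assert (Rabs a * Rabs u <= Rabs a * dl) by (apply Rmult_le_compat_l; lra).
  assert (Rabs b * Rabs v <= Rabs b * dl) by (apply Rmult_le_compat_l; lra).
  assert (Rabs c * Rabs w <= Rabs c * dl) by (apply Rmult_le_compat_l; lra).
  assert (0 < dl) by (unfold dl; apply Rdiv_lt_0_compat; lra).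
  rewrite E. unfold M. nra.
Qed.

Lemma aff_smooth a b c d : smooth (aff a b c d).
Proof.
  intros l p.
  assert (Hl : exists a' b' c' d', iter_pd l (aff a b c d) = aff a' b' c' d').
  { induction l as [|i l IH]; simpl.
    - eauto.
    - destruct IH as (a'&b'&c'&d'&E). rewrite E.
      exists 0, 0, 0, (match i with 0%nat => a' | 1%nat => b' | _ => c' end).
      extensionality q. rewrite pd_aff. unfold aff. ring. }
  destruct Hl as (a'&b'&c'&d'&E). rewrite E. split.
  - apply aff_cont.
  - intros i _. exists (match i with 0%nat => a' | 1%nat => b' | _ => c' end). unfold has_pd. destruct p as [[x y] z].
    destruct i as [|[|i]]; simpl.
    + apply (shape_lim _ (aff a' b' c' d' (x,y,z)) a' 0); intros; unfold aff; simpl; ring.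
    + apply (shape_lim _ (aff a' b' c' d' (x,y,z)) b' 0); intros; unfold aff; simpl; ring.
    + apply (shape_lim _ (aff a' b' c' d' (x,y,z)) c' 0); intros; unfold aff; simpl; ring.
Qed.

Definition gc (A B C : R) (i j : nat) : R*R*R :=
  match i, j with
  | O,O => (-C,0,0)
  | S O,S O => (B,0,A) | S O,S (S O) => (0,A,0) | S (S O),S O => (0,A,0) | S (S O),S (S O) => (A,0,0)
  | _,_ => (0,0,0) end.

Definition q3 (t : R*R*R) (x : R) : R := match t with (a,b,c) => quad a b c x end.
Definition dq3 (t : R*R*R) (x : R) : R := match t with (a,b,c) => b + 2*c*x end.

Lemma pd_q3 t m p : pd (fun p => q3 t (coord p 0)) m p =
  match m with 0%nat => dq3 t (coord p 0) | _ => 0 end.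
Proof. destruct t as [[a b] c]. apply pd_quad. Qed.

Lemma metric_eq A B C i j : heis_metric A B C i j = fun p => q3 (gc A B C i j) (coord p 0).
Proof.
  extensionality p. unfold heis_metric, theta1, theta2, theta3, q3, quad.
  destruct i as [|[|[|i]]]; destruct j as [|[|[|j]]]; simpl; ring.
Qed.

Lemma metric_eq' A B C : heis_metric A B C = fun i j p => q3 (gc A B C i j) (coord p 0).
Proof. extensionality i; extensionality j. apply metric_eq. Qed.

Lemma det_eq A B C p : det3 (heis_metric A B C) p = -(A*B*C).
Proof.
  rewrite metric_eq'. unfold det3, sum3, m3. simpl. unfold quad. ring.
Qed.

Definition Gc (A B C : R) (k i j : nat) : R*R*R :=
  match k, i, j with
  | O, S O, S O => (0, A/C, 0)
  | O, S O, S (S O) => (A/(2*C), 0, 0)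
  | O, S (S O), S O => (A/(2*C), 0, 0)
  | S O, O, S O => (0, A/(2*B), 0)
  | S O, S O, O => (0, A/(2*B), 0)
  | S O, O, S (S O) => (A/(2*B), 0, 0)
  | S O, S (S O), O => (A/(2*B), 0, 0)
  | S (S O), O, S O => (/2, 0, -A/(2*B))
  | S (S O), S O, O => (/2, 0, -A/(2*B))
  | S (S O), O, S (S O) => (0, -A/(2*B), 0)
  | S (S O), S (S O), O => (0, -A/(2*B), 0)
  | _, _, _ => (0,0,0) end.

Lemma Gamma_eq A B C (hA : 0 < A) (hB : 0 < B) (hC : 0 < C) k i j :
  (k < 3)%nat -> (i < 3)%nat -> (j < 3)%nat ->
  christoffel (heis_metric A B C) k i j = fun p => q3 (Gc A B C k i j) (coord p 0).
Proof.
  intros hk hi hj. extensionality p.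
  unfold christoffel, inv_metric. rewrite !det_eq. unfold sum3. rewrite !metric_eq. rewrite !pd_q3.
  unfold sum3, m3.
  destruct k as [|[|[|k]]]; try lia; destruct i as [|[|[|i]]]; try lia;
  destruct j as [|[|[|j]]]; try lia; simpl; unfold quad; field; lra.
Qed.

Theorem mainTheorem2 (A B C : R) (hA : 0 < A) (hB : 0 < B) (hC : 0 < C) :
  exists (X : vfield) (alpha : R),
    (forall k, (k < 3)%nat -> smooth (X k)) /\
    alpha < 0 /\
    forall (i j : nat) (p : pt), (i < 3)%nat -> (j < 3)%nat ->
      2 * ricci (heis_metric A B C) i j p
      + lie_deriv X (heis_metric A B C) i j p
      + alpha * heis_metric A B C i j p = 0.
Proof.
  set (K := A / (B*C)).
  assert (HK : 0 < K) by (unfold K; apply Rdiv_lt_0_compat; nra).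
  exists (fun k => match k with O => aff K 0 0 0 | S O => aff 0 K 0 0 | _ => aff 0 0 (2*K) 0 end).
  exists (-3*K). split; [|split].
  - intros k _. destruct k as [|[|k]]; apply aff_smooth.
  - lra.
  - intros i j p hi hj.
    unfold ricci, lie_deriv, sum3.
    rewrite !(Gamma_eq A B C hA hB hC) by lia.
    rewrite !metric_eq. rewrite !pd_q3. rewrite !pd_aff.
    unfold K.
    destruct i as [|[|[|i]]]; try lia; destruct j as [|[|[|j]]]; try lia;
      simpl; unfold aff, quad; simpl; field; lra.
Qed.
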